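(* Let $k\ge3$ be odd and let $G$ be a $k$-uniform hypergraph. Then the number of minimal canonical H-eigenvectors of the signless Laplacian tensor $\mathcal D+\mathcal A$ corresponding to the eigenvalue $0$, counted with $\mathbf x$ and $-\mathbf x$ identified, equals the number of singletons (isolated vertices) of $G$.
   Context: A $k$-uniform hypergraph $G=(V,E)$ has vertex set $V=[n]$ ($n\ge k$) and nonempty edge set $E$ of $k$-element subsets; $E_i=\{e\in E:i\in e\}$, $d_i=|E_i|$; a singleton is a vertex with $d_i=0$. $\mathcal A$: $a_{i_1\dots i_k}=\frac1{(k-1)!}$ if $\{i_1,\dots,i_k\}\in E$, else $0$; $\mathcal D$ diagonal with $d_{i\dots i}=d_i$; so $((\mathcal D+\mathcal A)\mathbf x^{k-1})_i=d_ix_i^{k-1}+\sum_{e\in E_i}\prod_{j\in e\setminus\{i\}}x_j$. A nonzero $\mathbf x\in\mathbb C^n$ is an eigenvector of $\mathcal T$ for $\lambda$ if $(\mathcal T\mathbf x^{k-1})_i=\lambda x_i^{k-1}$ for all $i$; an H-eigenvector is a real eigenvector; canonical means $\max_i|x_i|=1$; an eigenvector of eigenvalue $0$ is minimal if no eigenvector of eigenvalue $0$ has support strictly contained in its support. *)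

(* Defs.v *)
From HB Require Import structures.
From mathcomp Require Import all_boot all_order all_algebra.
Set Implicit Arguments. Unset Strict Implicit. Unset Printing Implicit Defensive.
Import Order.TTheory GRing.Theory Num.Theory.
Local Open Scope ring_scope.

Definition hdeg (n : nat) (E : {set {set 'I_n}}) (i : 'I_n) : nat :=
  #|[set e in E | i \in e]|.

(* ((D + A) x^{k-1})_i = d_i x_i^{k-1} + sum_{e in E_i} prod_{j in e \ {i}} x_j *)
Definition signless_lap_apply (C : numClosedFieldType) (n k : nat)
  (E : {set {set 'I_n}}) (x : {ffun 'I_n -> C}) (i : 'I_n) : C :=
  (hdeg E i)%:R * x i ^+ k.-1
  + \sum_(e in E | i \in e) \prod_(j in e :\ i) x j.

Definition is_eigvec (C : numClosedFieldType) (n k : nat)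
  (E : {set {set 'I_n}}) (x : {ffun 'I_n -> C}) (lam : C) : Prop :=
  x != 0 /\ forall i, signless_lap_apply k E x i = lam * x i ^+ k.-1.

Definition supp (C : numClosedFieldType) (n : nat) (x : {ffun 'I_n -> C})
  : {set 'I_n} := [set i | x i != 0].

(* minimal eigenvector of eigenvalue 0 (minimality among all, complex, eigenvectors) *)
Definition minimal_eigvec0 (C : numClosedFieldType) (n k : nat)
  (E : {set {set 'I_n}}) (x : {ffun 'I_n -> C}) : Prop :=
  is_eigvec k E x 0 /\
  ~ (exists y : {ffun 'I_n -> C}, is_eigvec k E y 0 /\ supp y \proper supp x).

(* H-eigenvector: real eigenvector *)
Definition is_real_vec (C : numClosedFieldType) (n : nat) (x : {ffun 'I_n -> C})
  : Prop := forall i, x i \is Num.real.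

Definition is_canonical (C : numClosedFieldType) (n : nat) (x : {ffun 'I_n -> C})
  : Prop := (forall i, `|x i| <= 1) /\ (exists i, `|x i| = 1).

Definition minimal_canonical_H_eigvec0 (C : numClosedFieldType) (n k : nat)
  (E : {set {set 'I_n}}) (x : {ffun 'I_n -> C}) : Prop :=
  minimal_eigvec0 k E x /\ is_real_vec x /\ is_canonical x.

Definition singletons (n : nat) (E : {set {set 'I_n}}) : {set 'I_n} :=
  [set i | hdeg E i == 0%N].

(* Main.v *)
Require Import Defs.
From HB Require Import structures.
From mathcomp Require Import all_boot all_order all_algebra.
Import Order.TTheory GRing.Theory Num.Theory.
Local Open Scope ring_scope.

Section S.
Variables (C : numClosedFieldType) (k n : nat) (E : {set {set 'I_n}}).
Hypothesis kodd : odd k.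
Hypothesis k3 : (3 <= k)%N.
Hypothesis Ek : forall e, e \in E -> #|e| = k.

Lemma hdeg_sum (x : {ffun 'I_n -> C}) i :
  (hdeg E i)%:R = \sum_(e in E | i \in e) (1 : C).
Proof.
rewrite /hdeg -sumr_const; apply: eq_bigl => e; by rewrite inE.
Qed.

Lemma unit_pow (c : C) : c \is Num.real -> `|c| = 1 -> c ^+ k.-1 = 1.
Proof.
move=> cr c1.
have -> : k.-1 = (2 * k./2)%N.
  have := odd_double_half k; rewrite kodd -muln2 mulnC; move=> h; rewrite -{1}h //.
rewrite exprM -real_normK // c1 expr1n expr1n //.
Qed.

Lemma step (x : {ffun 'I_n -> C}) i e :
  is_real_vec x -> is_eigvec k E x 0 -> (forall j, `|x j| <= 1) ->
  `|x i| = 1 -> e \in E -> i \in e -> \prod_(j in e :\ i) x j = -1.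
Proof.
move=> xr [_ xe] xle xi1 eE ie.
have := xe i; rewrite mul0r /signless_lap_apply hdeg_sum //.
rewrite unit_pow // mulr_suml -big_split /= => H.
have Hge : forall e', (e' \in E) && (i \in e') ->
    0 <= 1 * 1 + \prod_(j in e' :\ i) x j.
  move=> e' _; rewrite mulr1.
  have Pr : \prod_(j in e' :\ i) x j \is Num.real by apply: rpred_prod => j _.
  have : `|\prod_(j in e' :\ i) x j| <= 1.
    rewrite normr_prod; apply: prodr_ile1 => j _; by rewrite normr_ge0 xle.
  rewrite real_ler_norml // => /andP[h _]; by rewrite -subr_ge0 opprK addrC in h.
have Heq : (e \in E) && (i \in e) by rewrite eE ie.
have := psumr_eq0P Hge H Heq; rewrite mulr1 => /eqP.
by rewrite addrC addr_eq0 => /eqP.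
Qed.


Lemma neg1_neq1 : (-1 : C) <> 1.
Proof. move/eqP; rewrite eq_sym -addr_eq0 (_ : 1 + 1 = 2%:R) ?pnatr_eq0 //. Qed.

Lemma keylem (x : {ffun 'I_n -> C}) i :
  is_real_vec x -> is_eigvec k E x 0 -> (forall j, `|x j| <= 1) ->
  `|x i| = 1 -> hdeg E i = 0%N.
Proof.
move=> xr xe xle xi1.
apply/eqP; rewrite /hdeg cards_eq0; apply/eqP/setP => e; rewrite inE in_set0.
apply/negP => /andP[eE ie].
have P1 := @step x i e xr xe xle xi1 eE ie.
have absj : forall j, j \in e -> `|x j| = 1.
  move=> j je; case: (eqVneq j i) => [->//|ji].
  apply/eqP; rewrite eq_le xle /=.
  have : `|\prod_(l in e :\ i) x l| = 1 by rewrite P1 normrN1.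
  rewrite (big_setD1 j) /=; last by rewrite !inE ji je.
  rewrite normrM => h.
  rewrite -{}h -[leRHS](mulr1 `|x j|) ler_wpM2l // normr_prod prodr_ile1 // => l _.
  by rewrite normr_ge0 xle.
have allj : forall j, j \in e -> x j = x i.
  move=> j je.
  have hj := @step x j e xr xe xle (absj j je) eE je.
  have : \prod_(l in e) x l = - x j by rewrite (big_setD1 j) //= hj mulrN1.
  have : \prod_(l in e) x l = - x i by rewrite (big_setD1 i) //= P1 mulrN1.
  by move=> -> /eqP; rewrite eqr_opp => /eqP.
have : \prod_(l in e :\ i) x l = x i ^+ k.-1.
  rewrite (eq_bigr (fun _ => x i)); last by move=> l; rewrite inE => /andP[_ /allj].
  rewrite prodr_const; congr (_ ^+ _); have h := cardsD1 i e.
  by rewrite ie Ek // in h; rewrite h.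
by rewrite P1 unit_pow ?xr //; apply: neg1_neq1.
Qed.


Definition ev (c : C) (i : 'I_n) : {ffun 'I_n -> C} :=
  [ffun j => if j == i then c else 0].

Lemma ev_eig c i : c != 0 -> i \in singletons E -> is_eigvec k E (ev c i) 0.
Proof.
move=> c0; rewrite inE => /eqP hi; split.
  apply/negP => /eqP/ffunP/(_ i); rewrite !ffunE eqxx => /eqP.
  by rewrite (negbTE c0).
have hempty : forall e, e \in E -> i \notin e.
  move=> e eE; apply/negP=> ie; move: hi; rewrite /hdeg => /eqP.
  by rewrite cards_eq0 => /eqP/setP/(_ e); rewrite !inE eE ie.
move=> j; rewrite mul0r /signless_lap_apply.
case: (eqVneq j i) => [->|ji].
  rewrite hi mul0r add0r big1 // => e /andP[eE ie].
  by rewrite (negbTE (hempty e eE)) in ie.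
rewrite ffunE (negbTE ji) expr0n /=.
have -> : (k.-1 == 0)%N = false by case: k k3 => [|[|[|m]]].
rewrite mulr0 add0r; apply: big1 => e /andP[eE je].
have : (0 < #|e :\ j|)%N.
  have h := cardsD1 j e; rewrite je Ek // in h.
  by move: k3; rewrite h add1n ltnS => /ltnW.
rewrite card_gt0 => /set0Pn[l le]; rewrite (big_setD1 l) //= ffunE.
have li : l != i.
  apply/negP => /eqP li; move: le; rewrite !inE li => /andP[_ ie].
  by move: (hempty e eE); rewrite ie.
by rewrite (negbTE li) mul0r.
Qed.

Lemma ev_min c i : c != 0 -> c \is Num.real -> `|c| = 1 ->
  i \in singletons E -> minimal_canonical_H_eigvec0 k E (ev c i).
Proof.
move=> c0 cr c1 iS; split; [split|split].
- exact: ev_eig.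
- case=> y [[y0 _] /properP[/subsetP sub [j jB jA]]].
  have ji : j = i.
    by move: jB; rewrite inE ffunE; case: (eqVneq j i) => //; rewrite eqxx.
  move: jA; rewrite ji inE negbK => /eqP yi.
  move/negP: y0; apply; apply/eqP/ffunP => l; rewrite ffunE.
  case: (eqVneq l i) => [->//|li].
  case: (eqVneq (y l) 0) => // yl.
  have := sub l; rewrite !inE ffunE (negbTE li) eqxx => /(_ yl) //.
- move=> m; rewrite /ev ffunE.
  case: ifP => _; rewrite ?real0 //.
- split; first by move=> m; rewrite /ev ffunE; case: ifP => _; rewrite ?c1 ?normr0.
  by exists i; rewrite /ev ffunE eqxx.
Qed.

End S.

Theorem corollary5p1 (C : numClosedFieldType) (k n : nat)
  (E : {set {set 'I_n}}) :
  odd k -> (3 <= k)%N -> (k <= n)%N -> E != set0 ->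
  (forall e, e \in E -> #|e| = k) ->
  exists s : seq {ffun 'I_n -> C},
    [/\ uniq s,
        size s = #|singletons E|,
        (forall x, x \in s -> - x \notin s) &
        (forall x, minimal_canonical_H_eigvec0 k E x <-> (x \in s \/ - x \in s))].
Proof.
move=> kodd k3 _ _ Ek.
exists [seq ev C n 1 i | i <- enum (singletons E)]; split.
- rewrite map_inj_uniq ?enum_uniq // => i j /ffunP/(_ i); rewrite !ffunE eqxx.
  by case: (eqVneq i j) => // _ /eqP; rewrite ?oner_eq0 // eq_sym oner_eq0.
- by rewrite size_map -cardE.
- move=> x /mapP[i _ ->]; apply/negP => /mapP[j _] /ffunP/(_ i).
  rewrite !ffunE eqxx; case: ifP => _ /eqP.
    by move/eqP/neg1_neq1.
  by rewrite oppr_eq0 oner_eq0.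
- move=> x; split.
  + case=> [[xe xmin] [xr [xle [i xi1]]]].
    have hd := @keylem C k n E kodd Ek x i xr xe xle xi1.
    have iS : i \in singletons E by rewrite inE hd.
    have xi0 : x i != 0 by rewrite -normr_eq0 xi1 oner_eq0.
    have xi : (x i == 1) || (x i == -1).
      by rewrite -sqrf_eq1 -real_normK ?xr // xi1 expr1n.
    have suppx : forall j, j != i -> x j = 0.
      move=> j ji; case: (eqVneq (x j) 0) => // xj; exfalso; apply: xmin.
      exists (ev C n (x i) i); split; first exact: ev_eig.
      apply/properP; split.
        apply/subsetP => l; rewrite !inE ffunE.
        by case: (eqVneq l i) => [->|]; rewrite ?eqxx.
      by exists j; rewrite !inE ?ffunE ?(negbTE ji) ?eqxx ?xj.
    have xev : x = ev C n (x i) i.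
      apply/ffunP => j; rewrite ffunE; case: (eqVneq j i) => [->//|ji].
      exact: suppx.
    case/orP: xi => /eqP h; [left|right]; apply/mapP; exists i; rewrite ?mem_enum //.
      by rewrite xev h.
    by apply/ffunP => j; rewrite xev h !ffunE; case: ifP; rewrite ?opprK ?oppr0.
  + have H1 : forall i, i \in singletons E -> forall c : C,
        c \is Num.real -> `|c| = 1 -> minimal_canonical_H_eigvec0 k E (ev C n c i).
      move=> i iS c cr c1; apply: ev_min => //.
      by rewrite -normr_eq0 c1 oner_eq0.
    case=> /mapP[i]; rewrite mem_enum => iS h.
      by rewrite h; apply: H1; rewrite ?real1 ?normr1.
    have -> : x = ev C n (-1) i.
      by apply/ffunP => j; rewrite -[x]opprK h !ffunE; case: ifP; rewrite ?oppr0.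
    by apply: H1; rewrite ?normrN1 // rpredN real1.
Qed.
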